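(* Let $(\mathfrak{g},[\cdot,\ldots,\cdot],\varepsilon,\alpha)$ be an $n$-Hom-Lie color algebra and $\mathcal{P}$ a strict product structure on it. Then $\mathcal{P}$ is a product structure on $\mathfrak{g}$, and, writing $\mathfrak{g}_+=\{x:\mathcal{P}x=x\}$ and $\mathfrak{g}_-=\{x:\mathcal{P}x=-x\}$, for every $1\le i\le n-1$ we have $[a_1,\ldots,a_i,b_{i+1},\ldots,b_n]=0$ for all $a_1,\ldots,a_i\in\mathfrak{g}_+$ and $b_{i+1},\ldots,b_n\in\mathfrak{g}_-$.
   Context: $\mathbb{K}$ is a field of characteristic zero and $\Gamma$ an abelian group. A bicharacter is a map $\varepsilon:\Gamma\times\Gamma\to\mathbb{K}\setminus\{0\}$ with $\varepsilon(a,b)\varepsilon(b,a)=1$, $\varepsilon(a,b+c)=\varepsilon(a,b)\varepsilon(a,c)$, $\varepsilon(a+b,c)=\varepsilon(a,c)\varepsilon(b,c)$. For homogeneous $x,y$, $\varepsilon(x,y)=\varepsilon(|x|,|y|)$ and $\varepsilon(x,y_1+\dots+y_k)=\varepsilon(|x|,|y_1|+\dots+|y_k|)$ ($=1$ for an empty sum). An $n$-Hom-Lie color algebra $(\mathfrak{g},[\cdot,\ldots,\cdot],\varepsilon,\alpha)$ is a $\Gamma$-graded vector space with an $n$-linear bracket of degree zero, a bicharacter $\varepsilon$ and a degree-zero linear map $\alpha$ such that for homogeneous elements: (i) $[x_1,\ldots,x_i,x_{i+1},\ldots,x_n]=-\varepsilon(x_i,x_{i+1})[x_1,\ldots,x_{i+1},x_i,\ldots,x_n]$;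 (ii) $[\alpha(x_1),\ldots,\alpha(x_{n-1}),[y_1,\ldots,y_n]]=\sum_{i=1}^n\varepsilon(x_1+\dots+x_{n-1},y_1+\dots+y_{i-1})[\alpha(y_1),\ldots,\alpha(y_{i-1}),[x_1,\ldots,x_{n-1},y_i],\alpha(y_{i+1}),\ldots,\alpha(y_n)]$. For a degree-zero linear $\mathcal{N}$ set $[\cdot]^0_{\mathcal{N}}=[\cdot]$ and $[x_1,\ldots,x_n]^j_{\mathcal{N}}=\sum_{i_1<\dots<i_j}[x_1,\ldots,\mathcal{N}x_{i_1},\ldots,\mathcal{N}x_{i_j},\ldots,x_n]-\mathcal{N}([x_1,\ldots,x_n]^{j-1}_{\mathcal{N}})$ for $1\le j\le n-1$; $\mathcal{N}$ is a Nijenhuis operator if $\mathcal{N}\alpha=\alpha\mathcal{N}$ and $[\mathcal{N}x_1,\ldots,\mathcal{N}x_n]=\mathcal{N}([x_1,\ldots,x_n]^{n-1}_{\mathcal{N}})$. An almost product structure is a degree-zero linear $\mathcal{P}$ with $\mathcal{P}\neq\pm\mathrm{id}$ and $\mathcal{P}^2=\mathrm{id}$; a product structure is an almost product structure which is a Nijenhuis operator. A degree-zero linear map $\Theta$ is in the centroid if $\Theta\alpha=\alpha\Theta$ and $\Theta([x_1,x_2,\ldots,x_n])=[\Theta x_1,x_2,\ldots,x_n]$ for all $x_i$. A strict product structure is an almost product structure lying in the centroid. *)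

(* Defs.v *)
From HB Require Import structures.
From mathcomp Require Import all_boot all_order all_algebra.
Set Implicit Arguments. Unset Strict Implicit. Unset Printing Implicit Defensive.
Import Order.TTheory GRing.Theory Num.Theory.
Local Open Scope ring_scope.

Section HomLieColor.
Variables (K : fieldType) (G : zmodType) (V : lmodType K).

(* hom a x  <->  x is homogeneous of degree a, i.e. x \in V_a *)
Definition graded_space (hom : G -> V -> Prop) : Prop :=
  [/\ (forall a, hom a 0),
      (forall a x y, hom a x -> hom a y -> hom a (x + y)),
      (forall a (k : K) x, hom a x -> hom a (k *: x)),
      (forall x : V, exists (s : seq G) (f : G -> V),
          (forall g, hom g (f g)) /\ x = \sum_(g <- s) f g) &
      (forall (s : seq G) (f : G -> V), uniq s -> (forall g, hom g (f g)) ->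
          \sum_(g <- s) f g = 0 -> forall g, g \in s -> f g = 0)].

Definition bicharacter (eps : G -> G -> K) : Prop :=
  [/\ (forall a b, eps a b != 0),
      (forall a b, eps a b * eps b a = 1),
      (forall a b c, eps a (b + c) = eps a b * eps a c) &
      (forall a b c, eps (a + b) c = eps a c * eps b c)].

Definition deg0 (hom : G -> V -> Prop) (f : V -> V) : Prop :=
  forall a x, hom a x -> hom a (f x).

Variable n : nat.

Definition upd (x : {ffun 'I_n -> V}) (i : 'I_n) (v : V) : {ffun 'I_n -> V} :=
  [ffun j => if j == i then v else x j].

Definition multilinear (br : {ffun 'I_n -> V} -> V) : Prop :=
  forall (x : {ffun 'I_n -> V}) (i : 'I_n) (k : K) (u v : V),
    br (upd x i (k *: u + v)) = k *: br (upd x i u) + br (upd x i v).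

Definition bracket_deg0 (hom : G -> V -> Prop) (br : {ffun 'I_n -> V} -> V) :=
  forall (a : 'I_n -> G) (x : {ffun 'I_n -> V}),
    (forall i, hom (a i) (x i)) -> hom (\sum_(i < n) a i) (br x).

Definition color_skew (hom : G -> V -> Prop) (eps : G -> G -> K)
    (br : {ffun 'I_n -> V} -> V) : Prop :=
  forall (a : 'I_n -> G) (x : {ffun 'I_n -> V}) (i j : 'I_n),
    val j = (val i).+1 -> (forall k, hom (a k) (x k)) ->
    br x = - (eps (a i) (a j) *: br [ffun k => if k == i then x j else if k == j then x i else x k]).

(* (ii) Hom-Filippov-Jacobi identity.  The (n-1) elements x_1..x_{n-1} are
   the entries of x at indices < n-1 (the last entry of x is ignored). *)
Definition hom_jacobi (hom : G -> V -> Prop) (eps : G -> G -> K)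
    (br : {ffun 'I_n -> V} -> V) (alpha : V -> V) : Prop :=
  forall (a b : 'I_n -> G) (x y : {ffun 'I_n -> V}),
    (forall j : 'I_n, (val j < n.-1)%N -> hom (a j) (x j)) ->
    (forall k, hom (b k) (y k)) ->
    br [ffun j => if val j == n.-1 then br y else alpha (x j)] =
    \sum_(i < n)
      eps (\sum_(j < n | (val j < n.-1)%N) a j) (\sum_(k < n | (val k < val i)%N) b k) *:
      br [ffun k => if k == i then
                      br [ffun j => if val j == n.-1 then y i else x j]
                    else alpha (y k)].

Definition nHomLieColor (hom : G -> V -> Prop) (br : {ffun 'I_n -> V} -> V)
    (eps : G -> G -> K) (alpha : {linear V -> V}) : Prop :=
  [/\ graded_space hom, multilinear br, bracket_deg0 hom br, bicharacter eps &
      [/\ deg0 hom alpha, color_skew hom eps br & hom_jacobi hom eps br alpha]].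

Definition applyN (N : V -> V) (S : {set 'I_n}) (x : {ffun 'I_n -> V}) :
    {ffun 'I_n -> V} := [ffun k => if k \in S then N (x k) else x k].

Fixpoint nbr (br : {ffun 'I_n -> V} -> V) (N : V -> V) (j : nat)
    (x : {ffun 'I_n -> V}) : V :=
  match j with
  | 0 => br x
  | j'.+1 => \sum_(S : {set 'I_n} | #|S| == j'.+1) br (applyN N S x)
             - N (nbr br N j' x)
  end.

Definition nijenhuis (hom : G -> V -> Prop) (br : {ffun 'I_n -> V} -> V)
    (alpha : V -> V) (N : {linear V -> V}) : Prop :=
  [/\ deg0 hom N, (forall v, N (alpha v) = alpha (N v)) &
      forall x : {ffun 'I_n -> V},
        br [ffun k => N (x k)] = N (nbr br N n.-1 x)].

Definition almost_product (hom : G -> V -> Prop) (P : {linear V -> V}) : Prop :=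
  [/\ deg0 hom P, ~ (forall v, P v = v), ~ (forall v, P v = - v) &
      forall v, P (P v) = v].

Definition product_structure (hom : G -> V -> Prop) (br : {ffun 'I_n -> V} -> V)
    (alpha : V -> V) (P : {linear V -> V}) : Prop :=
  almost_product hom P /\ nijenhuis hom br alpha P.

Definition centroid (hom : G -> V -> Prop) (br : {ffun 'I_n -> V} -> V)
    (alpha : V -> V) (T : {linear V -> V}) : Prop :=
  [/\ deg0 hom T, (forall v, T (alpha v) = alpha (T v)) &
      forall (x : {ffun 'I_n -> V}) (i0 : 'I_n), val i0 = 0%N ->
        T (br x) = br (upd x i0 (T (x i0)))].

Definition strict_product (hom : G -> V -> Prop) (br : {ffun 'I_n -> V} -> V)
    (alpha : V -> V) (P : {linear V -> V}) : Prop :=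
  almost_product hom P /\ centroid hom br alpha P.

End HomLieColor.

(* Main.v *)
Require Import Defs.
From HB Require Import structures.
From mathcomp Require Import all_boot all_order all_algebra.
From mathcomp Require Import zify.
Import Order.TTheory GRing.Theory Num.Theory.
Local Open Scope ring_scope.

Lemma updE {K : fieldType} {V : lmodType K} {n : nat}
  (x : {ffun 'I_n -> V}) i v j : upd x i v j = if j == i then v else x j.
Proof. by rewrite ffunE. Qed.

Lemma upd_id {K : fieldType} {V : lmodType K} {n : nat}
  (x : {ffun 'I_n -> V}) i : upd x i (x i) = x.
Proof. by apply/ffunP => j; rewrite updE; case: eqP => // ->. Qed.

Lemma upd_upd {K : fieldType} {V : lmodType K} {n : nat}
  (x : {ffun 'I_n -> V}) i u v : upd (upd x i u) i v = upd x i v.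
Proof. by apply/ffunP => j; rewrite !updE; case: eqP. Qed.

Lemma upd_comm {K : fieldType} {V : lmodType K} {n : nat}
  (x : {ffun 'I_n -> V}) i j u v : i != j ->
  upd (upd x i u) j v = upd (upd x j v) i u.
Proof.
move=> ne; apply/ffunP => k; rewrite !updE.
case: (eqVneq k j) => [->|nj] //; first by rewrite eq_sym (negbTE ne).
Qed.

Lemma F_0 {K : fieldType} {V : lmodType K} {n : nat} {F : {ffun 'I_n -> V} -> V} :
  (forall x i u v, F (upd x i (u+v)) = F (upd x i u) + F (upd x i v)) ->
  forall x i, F (upd x i 0) = 0.
Proof.
move=> Fadd x i; have := Fadd x i 0 0; rewrite addr0 => h.
by apply: (@addrI _ (F (upd x i 0))); rewrite addr0 -h.
Qed.

Lemma homog_ext {K : fieldType} {G : zmodType} {V : lmodType K} {n : nat}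
  (hom : G -> V -> Prop) (F : {ffun 'I_n -> V} -> V) :
  graded_space hom ->
  (forall x i u v, F (upd x i (u+v)) = F (upd x i u) + F (upd x i v)) ->
  (forall (a : 'I_n -> G) (x : {ffun 'I_n -> V}), (forall k, hom (a k) (x k)) -> F x = 0) ->
  forall x, F x = 0.
Proof.
move=> [_ _ _ hdec _] Fadd Fh.
have F0 := F_0 Fadd.
have Fsum x i (s : seq G) (f : G -> V) :
    F (upd x i (\sum_(g <- s) f g)) = \sum_(g <- s) F (upd x i (f g)).
  elim: s => [|g s IH]; first by rewrite !big_nil F0.
  by rewrite !big_cons Fadd IH.
have main : forall m (x : {ffun 'I_n -> V}) (a : 'I_n -> G),
    (forall k : 'I_n, (m <= val k)%N -> hom (a k) (x k)) -> F x = 0.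
  elim=> [|m IH] x a ha; first by apply: (Fh a) => k; apply: ha.
  case: (ltnP m n) => [lt_mn | le_nm]; last first.
    apply: (IH x a) => k hk; exfalso; move: hk (ltn_ord k) => /= hk hk'; lia.
  pose i := Ordinal lt_mn.
  have [s [f [hf hxi]]] := hdec (x i).
  rewrite -(upd_id x i) hxi Fsum big1_seq //= => g _.
  apply: (IH _ (fun k => if k == i then g else a k)) => k hk.
  rewrite updE; case: (eqVneq k i) => [e|ne]; first exact: hf.
  apply: ha; have : val k != m by apply: contra ne => /eqP h; apply/eqP/val_inj.
  lia.
move=> x; apply: (main n x (fun=> 0)) => k; by rewrite leqNgt ltn_ord.
Qed.

Lemma ml_add {K : fieldType} {V : lmodType K} {n : nat} {br : {ffun 'I_n -> V} -> V} :
  multilinear br -> forall x i u v, br (upd x i (u+v)) = br (upd x i u) + br (upd x i v).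
Proof. by move=> hml x i u v; have := hml x i 1 u v; rewrite !scale1r. Qed.

Lemma ml_N {K : fieldType} {V : lmodType K} {n : nat} {br : {ffun 'I_n -> V} -> V} :
  multilinear br -> forall x i u, br (upd x i (- u)) = - br (upd x i u).
Proof.
move=> hml x i u; have := hml x i (-1) u 0.
by rewrite addr0 !scaleN1r (F_0 (ml_add hml)) addr0.
Qed.

Lemma cent_hom {K : fieldType} {G : zmodType} {V : lmodType K} {n : nat}
  (hom : G -> V -> Prop) (br : {ffun 'I_n -> V} -> V) (eps : G -> G -> K)
  (P : {linear V -> V}) :
  color_skew hom eps br -> deg0 hom P ->
  (forall x (i0 : 'I_n), val i0 = 0%N -> P (br x) = br (upd x i0 (P (x i0)))) ->
  forall m (i : 'I_n), val i = m -> forall a (x : {ffun 'I_n -> V}),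
    (forall k, hom (a k) (x k)) -> P (br x) = br (upd x i (P (x i))).
Proof.
move=> hskew hdeg hcent.
elim=> [|m IH] i hi a x hx; first exact: hcent.
have lt_mn : (m < n)%N by move: (ltn_ord i); rewrite -[nat_of_ord i]/(val i) hi; lia.
pose i' := Ordinal lt_mn.
have hi' : val i = (val i').+1 by rewrite hi.
have ne : i' != i by apply/eqP => /(congr1 val) /=; rewrite hi; lia.
pose z := upd x i (P (x i)).
have hz : forall k, hom (a k) (z k).
  by move=> k; rewrite updE; case: eqP => [->|_]; [apply: hdeg|]; apply: hx.
rewrite [RHS](hskew a z i' i hi' hz).
rewrite (hskew a x i' i hi' hx) linearN linearZ /=.
pose y : {ffun 'I_n -> V} := [ffun k => if k == i' then x i else if k == i then x i' else x k].
rewrite -/y.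
rewrite (IH i' erefl (fun k => if k == i' then a i else if k == i then a i' else a k) y).
  congr (- (_ *: br _)); apply/ffunP => k; rewrite !ffunE !eqxx.
  rewrite (negbTE ne).
  by case: (eqVneq k i') => // _; case: (eqVneq k i).
move=> k; rewrite ffunE; case: (eqVneq k i') => [_|nk]; first exact: hx.
by case: (eqVneq k i) => [_|nk']; apply: hx.
Qed.

Lemma cent_all {K : fieldType} {G : zmodType} {V : lmodType K} {n : nat}
  (hom : G -> V -> Prop) (br : {ffun 'I_n -> V} -> V) (eps : G -> G -> K)
  (P : {linear V -> V}) :
  graded_space hom -> multilinear br ->
  color_skew hom eps br -> deg0 hom P ->
  (forall x (i0 : 'I_n), val i0 = 0%N -> P (br x) = br (upd x i0 (P (x i0)))) ->
  forall (x : {ffun 'I_n -> V}) i, P (br x) = br (upd x i (P (x i))).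
Proof.
move=> hgr hml hskew hdeg hcent x i; apply/eqP; rewrite -subr_eq0; apply/eqP.
pose F (y : {ffun 'I_n -> V}) := P (br y) - br (upd y i (P (y i))).
apply: (@homog_ext _ _ _ _ hom F hgr) => [y j u v|a y hy]; last first.
  by rewrite /F (@cent_hom _ _ _ _ hom br eps P hskew hdeg hcent (val i) i erefl a y hy) subrr.
rewrite /F; case: (eqVneq j i) => [->|ne].
  rewrite !upd_upd !updE !eqxx linearD !(ml_add hml) linearD.
  by rewrite opprD addrACA.
have ne' : (i == j) = false by rewrite eq_sym (negbTE ne).
rewrite !updE ne'.
rewrite ![upd (upd y j _) i _](upd_comm _ _ _ _ _ ne).
by rewrite !(ml_add hml) linearD opprD addrACA.
Qed.

Lemma cent_set {K : fieldType} {V : lmodType K} {n : nat}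
  (br : {ffun 'I_n -> V} -> V) (P : {linear V -> V}) :
  (forall (x : {ffun 'I_n -> V}) i, P (br x) = br (upd x i (P (x i)))) ->
  forall k (S : {set 'I_n}) x, #|S| = k -> br (applyN P S x) = iter k P (br x).
Proof.
move=> Hc; elim=> [|k IH] S x hS.
  have -> : S = set0 by apply/eqP; rewrite -cards_eq0 hS.
  by congr br; apply/ffunP => j; rewrite ffunE in_set0.
have /set0Pn [i iS] : S != set0 by rewrite -card_gt0 hS.
have hS' : #|S :\ i| = k.
  by move: hS; rewrite (cardsD1 i S) iS add1n => -[].
have -> : applyN P S x = upd (applyN P (S :\ i) x) i (P (applyN P (S :\ i) x i)).
  apply/ffunP => j; rewrite !ffunE !in_setD1 eqxx /=.
  by case: (eqVneq j i) => [->|nj] //=; rewrite iS.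
by rewrite -Hc IH.
Qed.

Lemma nbr_formula {K : fieldType} {V : lmodType K} {n : nat}
  (br : {ffun 'I_n -> V} -> V) (P : {linear V -> V}) :
  (0 < n)%N ->
  (forall (x : {ffun 'I_n -> V}) i, P (br x) = br (upd x i (P (x i)))) ->
  forall j x, nbr br P j x = iter j P (br x) *+ 'C(n.-1, j).
Proof.
move=> n0 Hc; elim=> [|j IH] x /=; first by rewrite bin0.
rewrite IH.
under eq_bigr => S /eqP hS do rewrite (cent_set br P Hc _ _ _ hS).
rewrite sumr_const.
have -> : #|[pred S : {set 'I_n} | #|S| == j.+1]| = 'C(n, j.+1).
  by rewrite -cardsE card_draws card_ord.
have hb : 'C(n, j.+1) = ('C(n.-1, j.+1) + 'C(n.-1, j))%N by rewrite -binS prednK.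
by rewrite hb raddfMn /= mulrnDr addrK.
Qed.

Theorem lemma6p10 (K : fieldType) (G : zmodType) (V : lmodType K) (n : nat)
    (hom : G -> V -> Prop) (br : {ffun 'I_n -> V} -> V) (eps : G -> G -> K)
    (alpha P : {linear V -> V}) :
  [pchar K] =i pred0 ->
  nHomLieColor hom br eps alpha ->
  strict_product hom br alpha P ->
  product_structure hom br alpha P /\
  (forall i : nat, (1 <= i <= n.-1)%N ->
     forall x : {ffun 'I_n -> V},
       (forall k : 'I_n, (val k < i)%N -> P (x k) = x k) ->
       (forall k : 'I_n, (i <= val k)%N -> P (x k) = - x k) ->
       br x = 0).
Proof.
move=> hchar [hgr hml hdeg0 hbich [hadeg hskew hjac]] hsp.
have [hap [hPdeg hPalpha hcent]] := hsp.
have Hc := @cent_all _ _ _ _ hom br eps P hgr hml hskew hPdeg hcent.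
split.
  split => //; split => // x.
  have [n0|n_gt0] := posnP n.
    subst n => /=.
    have e : forall z w : {ffun 'I_0 -> V}, z = w by move=> z w; apply/ffunP => -[].
    have br0 : forall z, br z = 0.
      move=> z; rewrite (e z [ffun j => if val j == 0.-1 then br z else alpha (z j)]).
      rewrite (hjac (fun=> 0) (fun=> 0) z z); [by rewrite big_ord0| |]; by move=> -[].
    by rewrite !br0 raddf0.
  rewrite (nbr_formula br P n_gt0 Hc) binn mulr1n.
  have -> : [ffun k => P (x k)] = applyN P setT x.
    by apply/ffunP => k; rewrite !ffunE in_setT.
  by rewrite (cent_set br P Hc n) ?cardsT ?card_ord // -iterS prednK.
move=> i /andP [i1 in1] x hp hm.
have n0 : (0 < n)%N by lia.
have nl : (n.-1 < n)%N by lia.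
have e1 : P (br x) = br x.
  by rewrite (Hc x (Ordinal n0)) hp //= upd_id.
have e2 : P (br x) = - br x.
  by rewrite (Hc x (Ordinal nl)) hm //= (ml_N hml) upd_id.
have : br x *+ 2 = 0 by rewrite mulr2n -{1}e1 e2 addNr.
rewrite -scaler_nat => /eqP; rewrite scaler_eq0 => /orP [h2|/eqP //].
by have := hchar 2; rewrite !inE /= h2.
Qed.
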